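(* If the rows of ${\bf q}$ are pairwise distinct, then $\mathrm{Aut}_{\rm gr}(\mathcal{O}_{\bf q}(k^{n}))\cong(k^* )^n\rtimes\mathcal P_{\bf q}$.
   Context: Let $k$ be a field, $k^*=k\setminus\{0\}$, $n\ge1$, and ${\bf q}=(q_{ij})\in\mathcal M_n(k)$ with $q_{ij}q_{ji}=1$, $q_{ii}=1$ for all $i,j$. The quantum affine space is $\mathcal{O}_{\bf q}(k^{n})=k\langle x_1,\dots,x_n\rangle/\langle x_jx_i-q_{ij}x_ix_j,\ 1\le i,j\le n\rangle$, $\mathbb N$-graded with $\deg x_i=1$; $\mathrm{Aut}_{\rm gr}$ denotes its group of graded algebra automorphisms. $\mathcal P_{\bf q}=\{\pi\in S_n: q_{\pi(i)\pi(j)}=q_{ij}\ \forall\,1\le i,j\le n\}$, acting on $(k^* )^n$ (the diagonal automorphisms $x_i\mapsto\lambda_ix_i$) by permuting coordinates. *)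

(* Defs.v *)
From HB Require Import structures.
From mathcomp Require Import all_boot all_order all_algebra all_fingroup.
Set Implicit Arguments. Unset Strict Implicit. Unset Printing Implicit Defensive.
Import GRing.Theory.
Local Open Scope ring_scope.

Section QuantumAffine.
Variables (k : fieldType) (n : nat).

Definition q_rel (q : 'M[k]_n) (B : algType k) (y : 'I_n -> B) : Prop :=
  forall i j : 'I_n, y j * y i = q i j *: (y i * y j).

Definition alg_hom (A B : algType k) (f : A -> B) : Prop :=
  [/\ forall (a : k) (u v : A), f (a *: u + v) = a *: f u + f v,
      forall u v : A, f (u * v) = f u * f v
    & f 1 = 1].

(* (A, x) is the algebra k<x_1..x_n>/<x_j x_i - q_ij x_i x_j>, given by its
   universal property as a presented algebra. *)
Definition is_quantum_affine_space (q : 'M[k]_n) (A : algType k)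
    (x : 'I_n -> A) : Prop :=
  q_rel q x /\
  forall (B : algType k) (y : 'I_n -> B), q_rel q y ->
    exists g : A -> B,
      [/\ alg_hom g, forall i, g (x i) = y i
        & forall h : A -> B, alg_hom h -> (forall i, h (x i) = y i) -> h =1 g].

Definition homog (A : algType k) (x : 'I_n -> A) (d : nat) (u : A) : Prop :=
  exists (m : nat) (c : 'I_m -> k) (s : 'I_m -> seq 'I_n),
    (forall j, size (s j) = d) /\
    u = \sum_(j < m) c j *: \prod_(i <- s j) x i.

Definition graded_aut (A : algType k) (x : 'I_n -> A) (f : A -> A) : Prop :=
  [/\ alg_hom f, bijective f & forall d u, homog x d u -> homog x d (f u)].

Definition Pq (q : 'M[k]_n) : {set {perm 'I_n}} :=
  [set p : {perm 'I_n} | [forall i, forall j, q (p i) (p j) == q i j]].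

(* left action of S_n on (k^* )^n by permuting coordinates:
   (pi . mu)_i = mu_{pi^{-1}(i)} *)
Definition perm_act (p : {perm 'I_n}) (mu : 'I_n -> k) : 'I_n -> k :=
  fun i => mu ((p^-1)%g i).

End QuantumAffine.

(* Main.v *)
Require Import Defs.
From HB Require Import structures.
From mathcomp Require Import all_boot all_order all_algebra all_fingroup.
From mathcomp Require Import ring.
From Stdlib Require Import ClassicalEpsilon.
Import GRing.Theory.
Local Open Scope ring_scope.

Lemma hom0 {k : fieldType} {A B : algType k} {f : A -> B} : alg_hom f -> f 0 = 0.
Proof.
case=> Hl _ _; have := Hl 1 0 0; rewrite !scale1r addr0 => H.
by apply: (addrI (f 0)); rewrite addr0 -H.
Qed.

Lemma homD {k : fieldType} {A B : algType k} {f : A -> B} : alg_hom f ->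
  forall u v, f (u + v) = f u + f v.
Proof. by case=> Hl _ _ u v; have := Hl 1 u v; rewrite !scale1r. Qed.

Lemma homZ {k : fieldType} {A B : algType k} {f : A -> B} : alg_hom f ->
  forall a u, f (a *: u) = a *: f u.
Proof.
move=> Hf a u; have := Hf; case=> Hl _ _; have := Hl a u 0.
by rewrite !addr0 (hom0 Hf) addr0.
Qed.

Lemma homM {k : fieldType} {A B : algType k} {f : A -> B} : alg_hom f ->
  forall u v, f (u * v) = f u * f v.
Proof. by case. Qed.

Lemma hom1 {k : fieldType} {A B : algType k} {f : A -> B} : alg_hom f -> f 1 = 1.
Proof. by case. Qed.

Lemma hom_sum {k : fieldType} {A B : algType k} {f : A -> B} (I : Type) (r : seq I)
  (P : pred I) (F : I -> A) : alg_hom f ->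
  f (\sum_(i <- r | P i) F i) = \sum_(i <- r | P i) f (F i).
Proof. by move=> Hf; apply: (big_morph f (homD Hf) (hom0 Hf)). Qed.

Lemma hom_prod {k : fieldType} {A B : algType k} {f : A -> B} (I : Type) (r : seq I)
  (F : I -> A) : alg_hom f ->
  f (\prod_(i <- r) F i) = \prod_(i <- r) f (F i).
Proof. by move=> Hf; apply: (big_morph f (homM Hf) (hom1 Hf)). Qed.

Lemma hom_comp {k : fieldType} {A B C : algType k} {f : A -> B} {g : B -> C} :
  alg_hom f -> alg_hom g -> alg_hom (g \o f).
Proof.
move=> Hf Hg; split => [a u v|u v|] /=.
- by rewrite (homD Hf) (homZ Hf) (homD Hg) (homZ Hg).
- by rewrite (homM Hf) (homM Hg).
- by rewrite (hom1 Hf) (hom1 Hg).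
Qed.

Lemma hom_id {k : fieldType} {A : algType k} : alg_hom (@id A).
Proof. by split. Qed.

Lemma scaleM {k : fieldType} {A : algType k} (a b : k) (u v : A) :
  (a *: u) * (b *: v) = (a * b) *: (u * v).
Proof. by rewrite -scalerAl -scalerAr scalerA. Qed.

Lemma qrel_hom {k : fieldType} {n : nat} {q : 'M[k]_n} {A B : algType k}
  {x : 'I_n -> A} {h : A -> B} : q_rel q x -> alg_hom h -> q_rel q (h \o x).
Proof. by move=> Hq Hh i j /=; rewrite -(homM Hh) (Hq i j) (homZ Hh) (homM Hh). Qed.

Lemma hom_ext {k : fieldType} {n : nat} (q : 'M[k]_n) {A B : algType k}
  (x : 'I_n -> A) (h1 h2 : A -> B) : is_quantum_affine_space q x ->
  alg_hom h1 -> alg_hom h2 -> (forall i, h1 (x i) = h2 (x i)) -> h1 =1 h2.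
Proof.
move=> [Hq HU] H1 H2 E.
have [g [_ _ Hu]] := HU B _ (qrel_hom Hq H1).
have E1 := Hu h1 H1 (fun i => erefl).
have E2 := Hu h2 H2 (fun i => esym (E i)).
by move=> u; rewrite E1 E2.
Qed.

Definition Phi {k : fieldType} {n : nat} {A : algType k} (x : 'I_n -> A)
  (lam : 'I_n -> k) (p : {perm 'I_n}) : A -> A :=
  match excluded_middle_informative (exists g : A -> A, alg_hom g /\
     forall i, g (x i) = lam (p i) *: x (p i)) with
  | left H => proj1_sig (constructive_indefinite_description _ H)
  | right _ => id end.

Lemma Phi_spec {k : fieldType} {n : nat} {A : algType k} (x : 'I_n -> A)
  (lam : 'I_n -> k) (p : {perm 'I_n}) :
  (exists g : A -> A, alg_hom g /\ forall i, g (x i) = lam (p i) *: x (p i)) ->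
  alg_hom (Phi x lam p) /\ forall i, Phi x lam p (x i) = lam (p i) *: x (p i).
Proof.
rewrite /Phi; case: excluded_middle_informative => [H|//] _.
exact: (proj2_sig (constructive_indefinite_description _ H)).
Qed.

Lemma PqP {k : fieldType} {n : nat} {q : 'M[k]_n} {p : {perm 'I_n}} :
  p \in Pq q -> forall i j, q (p i) (p j) = q i j.
Proof. by rewrite inE => /forallP H i j; move/forallP: (H i) => /(_ j) /eqP. Qed.

Lemma Phi_good {k : fieldType} {n : nat} (q : 'M[k]_n) {A : algType k}
  (x : 'I_n -> A) lam p : is_quantum_affine_space q x -> p \in Pq q ->
  alg_hom (Phi x lam p) /\ forall i, Phi x lam p (x i) = lam (p i) *: x (p i).
Proof.
move=> [Hq HU] Hp; apply: Phi_spec.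
have Hy : q_rel q (fun i => lam (p i) *: x (p i)).
  move=> i j; rewrite !scaleM Hq (PqP Hp) scalerA scalerA.
  by congr (_ *: _); rewrite mulrC (mulrC (lam (p j))).
have [g [Hg Hgx _]] := HU A _ Hy.
by exists g.
Qed.


Definition EE {k : fieldType} (i j : nat) : 'M[k]_4 := delta_mx (inord i) (inord j).

Lemma EEM {k : fieldType} (i j j' l : nat) : (j < 4)%N -> (j' < 4)%N ->
  (EE i j : 'M[k]_4) * EE j' l = if j == j' then EE i l else 0.
Proof.
move=> hj hj'; rewrite /EE -mulmxE mul_delta_mx_cond.
case: (j =P j') => [->|ne]; first by rewrite eqxx.
have -> : (inord j == inord j' :> 'I_4) = false.
  apply/negP => /eqP /(congr1 val); rewrite /= !inordK //.
by rewrite mulr0n.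
Qed.

Lemma EEe {k : fieldType} (i j : nat) : (i < 4)%N -> (j < 4)%N ->
  (EE i j : 'M[k]_4) (inord i) (inord j) = 1.
Proof. by move=> hi hj; rewrite /EE mxE !eqxx. Qed.

Definition NN {k : fieldType} : 'M[k]_4 := EE 1 0 + EE 2 1.
Definition Ya {k : fieldType} : 'M[k]_4 := EE 1 0 + EE 3 2.
Definition Yb {k : fieldType} (s : k) : 'M[k]_4 := EE 2 0 + s *: EE 3 1.

Lemma NN2 {k : fieldType} : (NN : 'M[k]_4) * NN = EE 2 0.
Proof. by rewrite /NN mulrDl !mulrDr !EEM //= !(addr0, add0r). Qed.

Lemma Ya2 {k : fieldType} : (Ya : 'M[k]_4) * Ya = 0.
Proof. by rewrite /Ya mulrDl !mulrDr !EEM //= !addr0. Qed.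

Lemma Yb2 {k : fieldType} (s : k) : Yb s * Yb s = 0.
Proof.
by rewrite /Yb mulrDl !mulrDr -!scalerAl -!scalerAr !EEM //= !scaler0 !addr0.
Qed.

Lemma YaYb {k : fieldType} (s : k) : Ya * Yb s = EE 3 0.
Proof.
by rewrite /Ya /Yb mulrDl !mulrDr -!scalerAr !EEM //= !scaler0 !addr0 add0r.
Qed.

Lemma YbYa {k : fieldType} (s : k) : Yb s * Ya = s *: EE 3 0.
Proof.
by rewrite /Ya /Yb mulrDl !mulrDr -!scalerAl !EEM //= !scaler0 !addr0 !add0r.
Qed.

Lemma expand {k : fieldType} {B : algType k} (al be ga de : k) (P Q : B) :
  (al *: P + be *: Q) * (ga *: P + de *: Q) =
  (al * ga) *: (P * P) + (al * de) *: (P * Q) + (be * ga) *: (Q * P) + (be * de) *: (Q * Q).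
Proof. by rewrite mulrDl !mulrDr !scaleM !addrA. Qed.

Lemma EEentry {k : fieldType} (i j i' j' : nat) : (i < 4)%N -> (j < 4)%N ->
  (i' < 4)%N -> (j' < 4)%N ->
  (EE i j : 'M[k]_4) (inord i') (inord j') = ((i' == i) && (j' == j))%:R.
Proof.
move=> hi hj hi' hj'; rewrite /EE mxE.
have E : forall u v, (u < 4)%N -> (v < 4)%N -> (inord u == inord v :> 'I_4) = (u == v).
  move=> u v hu hv; apply/eqP/eqP => [/(congr1 (@nat_of_ord 4))|->] //; by rewrite !inordK.
by rewrite !E.
Qed.


Lemma diag_rep {k : fieldType} {n : nat} {q : 'M[k]_n} {A : algType k}
  {x : 'I_n -> A} : is_quantum_affine_space q x -> (forall i, q i i = 1) ->
  forall c, exists g : A -> 'M[k]_4,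
    alg_hom g /\ forall e, g (x e) = if e == c then NN else 0.
Proof.
move=> [Hq HU] hd c.
have Hy : q_rel q (fun e => if e == c then (NN : 'M[k]_4) else 0).
  move=> i j /=; case: ifP => /eqP Hj; case: ifP => /eqP Hi;
    rewrite ?mul0r ?mulr0 ?scaler0 //.
  by rewrite Hi Hj hd scale1r.
have [g [Hg Hgx _]] := HU _ _ Hy.
by exists g.
Qed.

Lemma pair_rep {k : fieldType} {n : nat} {q : 'M[k]_n} {A : algType k}
  {x : 'I_n -> A} : is_quantum_affine_space q x -> (forall i, q i i = 1) ->
  (forall i j, q i j * q j i = 1) ->
  forall a b, a != b -> exists g : A -> 'M[k]_4,
    alg_hom g /\ forall e, g (x e) =
      if e == a then Ya else if e == b then Yb (q a b) else 0.
Proof.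
move=> [Hq HU] hd hinv a b hab.
pose y e := if e == a then (Ya : 'M[k]_4) else if e == b then Yb (q a b) else 0.
have yE : forall e, [\/ e = a /\ y e = Ya, e = b /\ y e = Yb (q a b) | y e = 0].
  move=> e; rewrite /y; case: ifP => /eqP He; first by apply: Or31.
  by case: ifP => /eqP He'; [apply: Or32|apply: Or33].
have Hy : q_rel q y.
  move=> i j.
  case: (yE i) => [[-> ->]|[-> ->]|->]; case: (yE j) => [[-> ->]|[-> ->]|->];
    rewrite ?mul0r ?mulr0 ?scaler0 ?hd ?scale1r //.
  - by rewrite YbYa YaYb.
  - by rewrite YbYa YaYb scalerA mulrC hinv scale1r.
have [g [Hg Hgx _]] := HU _ _ Hy.
by exists g.
Qed.

Lemma hom_lin {k : fieldType} {n : nat} {A B : algType k} {g : A -> B}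
  (x : 'I_n -> A) (c : 'I_n -> k) : alg_hom g ->
  g (\sum_e c e *: x e) = \sum_e c e *: g (x e).
Proof. by move=> Hg; rewrite (hom_sum _ _ _ _ Hg); apply: eq_bigr => e _; rewrite (homZ Hg). Qed.

Lemma sum_one {k : fieldType} {n : nat} {B : algType k} (c : 'I_n -> k) (a : 'I_n)
  (P : B) : \sum_e c e *: (if e == a then P else 0) = c a *: P.
Proof.
rewrite (bigD1 a) //= eqxx big1 ?addr0 // => e /negbTE ->; exact: scaler0.
Qed.

Lemma sum_two {k : fieldType} {n : nat} {B : algType k} (c : 'I_n -> k) (a b : 'I_n)
  (P Q : B) : a != b ->
  \sum_e c e *: (if e == a then P else if e == b then Q else 0) = c a *: P + c b *: Q.
Proof.
move=> hab; rewrite (bigD1 a) //= eqxx (bigD1 b) 1?eq_sym //= (negbTE hab) eqxx.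
rewrite big1 ?addr0 // => e /andP [/negbTE -> /negbTE ->]; exact: scaler0.
Qed.


Lemma sum_delta1 {k : fieldType} {n : nat} (F : 'I_n -> k) (c : 'I_n) :
  \sum_a F a * (if a == c then 1 else 0) = F c.
Proof.
rewrite (bigD1 c) //= eqxx mulr1 big1 ?addr0 // => a /negbTE ->; exact: mulr0.
Qed.

Lemma sum_delta2 {k : fieldType} {n : nat} (F : 'I_n -> k) (a b : 'I_n) (u v : k) :
  a != b ->
  \sum_e F e * (if e == a then u else if e == b then v else 0) = F a * u + F b * v.
Proof.
move=> hab; rewrite (bigD1 a) //= eqxx (bigD1 b) 1?eq_sym //= (negbTE hab) eqxx.
rewrite big1 ?addr0 // => e /andP [/negbTE -> /negbTE ->]; exact: mulr0.
Qed.

Lemma key_unique {k : fieldType} {n : nat} (q : 'M[k]_n) (C : 'I_n -> 'I_n -> k) :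
  (forall i, q i i = 1) ->
  (forall i j a, C j a * C i a = q i j * (C i a * C j a)) ->
  (forall i j a b, a != b ->
     C j a * C i b + C j b * C i a * q a b = q i j * (C i a * C j b + C i b * C j a * q a b)) ->
  (forall v : 'I_n -> k, (forall i, \sum_a C i a * v a = 0) -> forall a, v a = 0) ->
  (forall a a', (forall c, q a c = q a' c) -> a = a') ->
  forall i a a', C i a != 0 -> C i a' != 0 -> a = a'.
Proof.
move=> hd HA HB Hcol Hrows i.
have L1 : forall c, C i c = 0 -> exists j, forall a, C i a != 0 -> q a c = q i j.
  move=> c Hc.
  case: (pickP (fun j => C j c != 0)) => [j Hj|H0]; last first.
    have := Hcol (fun b => if b == c then 1 else 0).
    move=> /(_ _) H; have {}H := H _ c; move: H; rewrite eqxx => H.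
    suff : (1 : k) = 0 by move/eqP; rewrite oner_eq0.
    apply: H => j; rewrite sum_delta1; exact/eqP/negbFE/H0.
  exists j => a Ha.
  have hac : a != c by apply: contraNneq Ha => ->; rewrite Hc.
  have := HB i j a c hac; rewrite Hc !mul0r !mulr0 !add0r addr0 => E.
  have : C j c * C i a * (q a c - q i j) = 0.
    by rewrite mulrBr E; ring.
  move/eqP; rewrite !mulf_eq0 (negbTE Hj) (negbTE Ha) /= subr_eq0.
  by move/eqP.
have L2 : forall a b, a != b -> C i a != 0 -> C i b != 0 -> q a b = 1.
  move=> a b hab Ha Hb.
  case: (pickP (fun j => C j a * C i b - C j b * C i a != 0)) => [j Hj|H0]; last first.
    have := Hcol (fun e => if e == a then C i b else if e == b then - C i a else 0).
    move=> H; have {}H := H _ a; move: H; rewrite eqxx => H.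
    suff : C i b = 0 by move/eqP; rewrite (negbTE Hb).
    apply: H => j; rewrite sum_delta2 //.
    by have := negbFE (H0 j); move/eqP => <-; rewrite mulrN.
  have hqij : q i j = 1.
    apply/eqP; apply: contraNT Hj => hq.
    have Ea := HA i j a; have Eb := HA i j b.
    have Za : C j a = 0.
      have : (1 - q i j) * (C i a * C j a) = 0 by rewrite mulrBl -Ea; ring.
      move/eqP; rewrite !mulf_eq0 subr_eq0 eq_sym (negbTE hq) (negbTE Ha) /=.
      by move/eqP.
    have Zb : C j b = 0.
      have : (1 - q i j) * (C i b * C j b) = 0 by rewrite mulrBl -Eb; ring.
      move/eqP; rewrite !mulf_eq0 subr_eq0 eq_sym (negbTE hq) (negbTE Hb) /=.
      by move/eqP.
    by rewrite Za Zb !mul0r subrr.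
  have := HB i j a b hab; rewrite hqij mul1r => E.
  have : (C j a * C i b - C j b * C i a) * (1 - q a b) = 0.
    have -> : (C j a * C i b - C j b * C i a) * (1 - q a b) =
      (C j a * C i b + C j b * C i a * q a b) - (C i a * C j b + C i b * C j a * q a b).
      by ring.
    by rewrite E subrr.
  move/eqP; rewrite mulf_eq0 (negbTE Hj) /= subr_eq0 eq_sym.
  by move/eqP.
move=> a a' Ha Ha'; apply: Hrows => c.
have [Hc|Hc] := eqVneq (C i c) 0.
  have [j Hj] := L1 c Hc.
  by rewrite (Hj a Ha) (Hj a' Ha').
have q1 : forall b, C i b != 0 -> q b c = 1.
  move=> b Hb; have [->|hbc] := eqVneq b c; first exact: hd.
  exact: L2.
by rewrite q1 // q1.
Qed.


Lemma row_to_col {k : fieldType} {n : nat} (C : 'I_n -> 'I_n -> k) :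
  (forall w : 'I_n -> k, (forall a, \sum_i w i * C i a = 0) -> forall i, w i = 0) ->
  (forall v : 'I_n -> k, (forall i, \sum_a C i a * v a = 0) -> forall a, v a = 0).
Proof.
move=> Hrow v Hv a.
pose M : 'M[k]_n := \matrix_(i, b) C i b.
have free : row_free M.
  rewrite -kermx_eq0; apply/eqP/matrixP => r s.
  have HK := mulmx_ker M.
  rewrite [X in _ = X]mxE; apply: (Hrow (fun i => kermx M r i) _ s) => b.
  have := congr1 (fun N : 'M_n => N r b) HK; rewrite [X in _ = X]mxE mxE => H; rewrite -[X in _ = X]H.
  by apply: eq_bigr => i _; rewrite [M _ _]mxE.
have Hu : M \in unitmx by rewrite -row_free_unit.
pose V : 'cV[k]_n := \col_b v b.
have MV : M *m V = 0.
  apply/matrixP => i j; rewrite [X in _ = X]mxE -[X in _ = X](Hv i) mxE.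
  by apply: eq_bigr => b _; rewrite !mxE.
have := mulKmx Hu V; rewrite MV mulmx0 => /(congr1 (fun N : 'cV_n => N a 0)).
by rewrite !mxE.
Qed.


Lemma PqI {k : fieldType} {n : nat} (q : 'M[k]_n) (p : {perm 'I_n}) :
  (forall i j, q (p i) (p j) = q i j) -> p \in Pq q.
Proof. by move=> H; rewrite inE; apply/forallP => i; apply/forallP => j; rewrite H. Qed.

Lemma PqV {k : fieldType} {n : nat} {q : 'M[k]_n} {p : {perm 'I_n}} :
  p \in Pq q -> (p^-1)%g \in Pq q.
Proof.
move=> Hp; apply: PqI => i j.
by rewrite -(PqP Hp) !permKV.
Qed.

Lemma PqM {k : fieldType} {n : nat} {q : 'M[k]_n} {p r : {perm 'I_n}} :
  p \in Pq q -> r \in Pq q -> (r * p)%g \in Pq q.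
Proof. by move=> Hp Hr; apply: PqI => i j; rewrite !permM (PqP Hp) (PqP Hr). Qed.

Lemma prod_scale {k : fieldType} {B : algType k} (I : Type) (r : seq I)
  (a : I -> k) (y : I -> B) :
  \prod_(l <- r) (a l *: y l) = (\prod_(l <- r) a l) *: \prod_(l <- r) y l.
Proof.
elim: r => [|h r IH]; first by rewrite !big_nil scale1r.
by rewrite !big_cons IH scaleM.
Qed.

Lemma part_aut {k : fieldType} {n : nat} (q : 'M[k]_n) {A : algType k}
  (x : 'I_n -> A) lam p : is_quantum_affine_space q x ->
  (forall i, lam i != 0) -> p \in Pq q -> graded_aut x (Phi x lam p).
Proof.
move=> HA Hl Hp.
have [Hh Hx] := Phi_good _ _ lam _ HA Hp.
split => //.
- pose mu i := (lam (p i))^-1.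
  have [Hh' Hx'] := Phi_good _ _ mu _ HA (PqV Hp).
  exists (Phi x mu (p^-1)%g).
  + have E : (Phi x mu (p^-1)%g \o Phi x lam p) =1 id.
      apply: (hom_ext _ _ _ _ HA (hom_comp Hh Hh') hom_id) => i /=.
      rewrite Hx (homZ Hh') Hx' scalerA permK /mu mulfV ?scale1r //.
    exact: E.
  + have E : (Phi x lam p \o Phi x mu (p^-1)%g) =1 id.
      apply: (hom_ext _ _ _ _ HA (hom_comp Hh' Hh) hom_id) => i /=.
      rewrite Hx' (homZ Hh) Hx scalerA /mu !permKV mulVf ?scale1r //.
    exact: E.
- move=> d u [m [c [s [Hs ->]]]].
  exists m, (fun j => c j * \prod_(l <- s j) lam (p l)), (fun j => map p (s j)).
  split; first by move=> j; rewrite size_map Hs.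
  rewrite (hom_sum _ _ _ _ Hh); apply: eq_bigr => j _.
  rewrite (homZ Hh) (hom_prod _ _ _ Hh).
  under eq_bigr do rewrite Hx.
  by rewrite prod_scale scalerA big_map.
Qed.

Lemma part_comp {k : fieldType} {n : nat} (q : 'M[k]_n) {A : algType k}
  (x : 'I_n -> A) lam p mu r : is_quantum_affine_space q x ->
  p \in Pq q -> r \in Pq q ->
  Phi x (fun i => lam i * perm_act p mu i) (r * p)%g =1 (Phi x lam p \o Phi x mu r).
Proof.
move=> HA Hp Hr.
have [H1 X1] := Phi_good _ _ (fun i => lam i * perm_act p mu i) _ HA (PqM Hp Hr).
have [Hl Xl] := Phi_good _ _ lam _ HA Hp.
have [Hm Xm] := Phi_good _ _ mu _ HA Hr.
apply: (hom_ext _ _ _ _ HA H1 (hom_comp Hm Hl)) => i /=.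
by rewrite X1 Xm (homZ Hl) Xl scalerA /perm_act !permM permK mulrC.
Qed.

Lemma NN10 {k : fieldType} : (NN : 'M[k]_4) (inord 1) (inord 0) = 1.
Proof. by rewrite /NN mxE !EEentry //= addr0. Qed.

Lemma scale_entry {k : fieldType} (c : k) (M : 'M[k]_4) i j : (c *: M) i j = c * M i j.
Proof. by rewrite mxE. Qed.

Lemma EE20 {k : fieldType} : (EE 2 0 : 'M[k]_4) (inord 2) (inord 0) = 1.
Proof. by rewrite EEentry. Qed.

Lemma EE30 {k : fieldType} : (EE 3 0 : 'M[k]_4) (inord 3) (inord 0) = 1.
Proof. by rewrite EEentry. Qed.

Lemma part_inj {k : fieldType} {n : nat} (q : 'M[k]_n) {A : algType k}
  (x : 'I_n -> A) lam p mu r : is_quantum_affine_space q x ->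
  (forall i, q i i = 1) ->
  (forall i, lam i != 0) -> p \in Pq q -> r \in Pq q ->
  Phi x lam p =1 Phi x mu r -> lam =1 mu /\ p = r.
Proof.
move=> HA hd Hl Hp Hr E.
have [Hh1 X1] := Phi_good _ _ lam _ HA Hp.
have [Hh2 X2] := Phi_good _ _ mu _ HA Hr.
have K : forall i, r i = p i /\ lam (p i) = mu (p i).
  move=> i; have := E (x i); rewrite X1 X2 => Ei.
  have [g [Hg Hgx]] := diag_rep HA hd (p i).
  have := congr1 g Ei; rewrite !(homZ Hg) !Hgx eqxx.
  have [->|ne] := eqVneq (r i) (p i).
    move/(congr1 (fun M : 'M[k]_4 => M (inord 1) (inord 0))); rewrite !scale_entry NN10 !mulr1.
    by [].
  rewrite scaler0 => /(congr1 (fun M : 'M[k]_4 => M (inord 1) (inord 0))).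
  rewrite scale_entry NN10 mulr1 mxE => /eqP; rewrite (negbTE (Hl _)) //.
have Epr : p = r by apply/permP => i; rewrite (K i).1.
split=> // b; have := (K ((p^-1)%g b)).2; by rewrite permKV.
Qed.


Lemma homog_gen {k : fieldType} {n : nat} {A : algType k} (x : 'I_n -> A) i :
  homog x 1 (x i).
Proof.
exists 1%N, (fun _ => 1), (fun _ => [:: i]); split => //.
by rewrite big_ord1 big_seq1 scale1r.
Qed.

Lemma deg1 {k : fieldType} {n : nat} {A : algType k} (x : 'I_n -> A) u :
  homog x 1 u -> exists r : 'I_n -> k, u = \sum_a r a *: x a.
Proof.
move=> [m [c [s [Hs ->]]]].
exists (fun a => \sum_(j < m) (if s j == [:: a] then c j else 0)).
under [RHS]eq_bigr do rewrite scaler_suml.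
rewrite exchange_big /=; apply: eq_bigr => j _.
have := Hs j; case: (s j) => [|h [|? ?]] //= _.
rewrite big_seq1 (bigD1 h) //= eqxx big1 ?addr0 // => a ha.
by rewrite eqseq_cons andbT eq_sym (negbTE ha) scale0r.
Qed.

Lemma scale_entry4 {k : fieldType} (c : k) (M : 'M[k]_4) i j : (c *: M) i j = c * M i j.
Proof. by rewrite mxE. Qed.
Lemma add_entry4 {k : fieldType} (M N : 'M[k]_4) i j : (M + N) i j = M i j + N i j.
Proof. by rewrite mxE. Qed.

Lemma part_surj {k : fieldType} {n : nat} (q : 'M[k]_n) {A : algType k}
  (x : 'I_n -> A) : is_quantum_affine_space q x ->
  (forall i j, q i j * q j i = 1) -> (forall i, q i i = 1) ->
  injective (fun i : 'I_n => row i q) ->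
  forall f, graded_aut x f ->
    exists lam p, [/\ forall i, lam i != 0, p \in Pq q & f =1 Phi x lam p].
Proof.
move=> HA hinv hd hrow f [fh fb fg].
have [C HC] : exists C : 'I_n -> 'I_n -> k, forall i, f (x i) = \sum_a C i a *: x a.
  have H : forall i, exists r : 'I_n -> k, f (x i) = \sum_a r a *: x a.
    move=> i; apply: deg1; apply: fg; exact: homog_gen.
  exists (fun i => proj1_sig (constructive_indefinite_description _ (H i))).
  move=> i; exact: (proj2_sig (constructive_indefinite_description _ (H i))).
have Hrel : forall i j, f (x j) * f (x i) = q i j *: (f (x i) * f (x j)).
  by move=> i j; rewrite -!(homM fh) -(homZ fh) HA.1.
have HAe : forall i j a, C j a * C i a = q i j * (C i a * C j a).
  move=> i j a.
  have [g [Hg Hgx]] := diag_rep HA hd a.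
  have Gf : forall l, g (f (x l)) = C l a *: NN.
    by move=> l; rewrite HC (hom_lin _ _ Hg); under eq_bigr do rewrite Hgx; rewrite sum_one.
  have := congr1 g (Hrel i j); rewrite (homZ Hg) !(homM Hg) !Gf !scaleM NN2.
  move/(congr1 (fun M : 'M[k]_4 => M (inord 2) (inord 0))).
  by rewrite !scale_entry4 EE20 !mulr1.
have HBe : forall i j a b, a != b ->
     C j a * C i b + C j b * C i a * q a b = q i j * (C i a * C j b + C i b * C j a * q a b).
  move=> i j a b hab.
  have [g [Hg Hgx]] := pair_rep HA hd hinv a b hab.
  have Gf : forall l, g (f (x l)) = C l a *: Ya + C l b *: Yb (q a b).
    by move=> l; rewrite HC (hom_lin _ _ Hg); under eq_bigr do rewrite Hgx; rewrite sum_two.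
  have := congr1 g (Hrel i j); rewrite (homZ Hg) !(homM Hg) !Gf !expand.
  rewrite Ya2 Yb2 YaYb YbYa !scaler0 !addr0 !add0r.
  move/(congr1 (fun M : 'M[k]_4 => M (inord 3) (inord 0))).
  rewrite !(add_entry4, scale_entry4) EE30 !mulr1 => ->.
  by congr (_ * _); ring.
have Hrow : forall w : 'I_n -> k, (forall a, \sum_i w i * C i a = 0) -> forall i, w i = 0.
  move=> w Hw.
  have E0 : f (\sum_i w i *: x i) = f 0.
    rewrite (hom0 fh) (hom_lin _ _ fh).
    under eq_bigr do rewrite HC scaler_sumr.
    rewrite exchange_big /=; apply: big1 => a _.
    under eq_bigr do rewrite scalerA.
    by rewrite -scaler_suml Hw scale0r.
  have Z := bij_inj fb E0.
  move=> i; have [g [Hg Hgx]] := diag_rep HA hd i.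
  have := congr1 g Z; rewrite (hom_lin _ _ Hg) (hom0 Hg).
  under eq_bigr do rewrite Hgx.
  rewrite sum_one.
  move/(congr1 (fun M : 'M[k]_4 => M (inord 1) (inord 0))).
  by rewrite scale_entry4 NN10 mulr1 mxE.
have Hcol := row_to_col C Hrow.
have Hrows : forall a a', (forall c, q a c = q a' c) -> a = a'.
  by move=> a a' H; apply: hrow; apply/rowP => c; rewrite !mxE.
have U := key_unique q C hd HAe HBe Hcol Hrows.
have Hex : forall i, exists a, C i a != 0.
  move=> i; case: (pickP (fun a => C i a != 0)) => [a Ha|H0]; first by exists a.
  have := Hrow (fun l => if l == i then 1 else 0) _ i; rewrite eqxx => H.
  suff : (1 : k) = 0 by move/eqP; rewrite oner_eq0.
  apply: H => a; rewrite (eq_bigr (fun l => C l a * (if l == i then 1 else 0))).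
    by rewrite sum_delta1; apply/eqP/negbFE/H0.
  by move=> l _; rewrite mulrC.
have [s Hs] : exists s : 'I_n -> 'I_n, forall i, C i (s i) != 0.
  exists (fun i => proj1_sig (constructive_indefinite_description _ (Hex i))).
  move=> i; exact: (proj2_sig (constructive_indefinite_description _ (Hex i))).
have sU : forall i a, C i a != 0 -> a = s i.
  by move=> i a Ha; apply: U Ha (Hs i).
have sinj : injective s.
  move=> i j Eij; apply/eqP; apply/negPn/negP => nij.
  pose w l := if l == i then C j (s j) else if l == j then - C i (s i) else 0.
  have := Hrow w _ i; rewrite /w eqxx => H.
  suff : C j (s j) = 0 by move/eqP; rewrite (negbTE (Hs j)).
  apply: H => a.
  rewrite (eq_bigr (fun l => C l a * w l)); last by move=> l _; rewrite mulrC.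
  rewrite sum_delta2 //.
  have [ea|na] := eqVneq a (s i).
    by rewrite ea Eij; ring.
  have Ci : C i a = 0.
    by apply/eqP; apply: contraTT na => /sU ->; rewrite eqxx.
  have Cj : C j a = 0.
    by apply/eqP; apply: contraTT na => /sU ->; rewrite Eij eqxx.
  by rewrite Ci Cj !mul0r addr0.
pose p := perm sinj.
have pE : forall i, p i = s i by move=> i; rewrite permE.
have Hp : p \in Pq q.
  apply: PqI => i j; rewrite !pE.
  have [->|nij] := eqVneq i j; first by rewrite !hd.
  have hab : s i != s j by apply: contra nij => /eqP/sinj ->.
  have := HBe i j (s i) (s j) hab.
  have Cib : C i (s j) = 0.
    by apply/eqP; apply: contraTT hab => /sU ->; rewrite eqxx.
  rewrite Cib !mul0r !mulr0 add0r addr0 => E.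
  have : C j (s j) * C i (s i) * (q (s i) (s j) - q i j) = 0.
    by rewrite mulrBr E; ring.
  move/eqP; rewrite !mulf_eq0 (negbTE (Hs j)) (negbTE (Hs i)) /= subr_eq0.
  by move/eqP.
exists (fun b => C ((p^-1)%g b) b), p; split => //.
  move=> b; have := Hs ((p^-1)%g b); by rewrite -pE permKV.
have [Hph Hpx] := Phi_good _ _ (fun b => C ((p^-1)%g b) b) _ HA Hp.
apply: (hom_ext _ _ _ _ HA fh Hph) => i.
rewrite Hpx HC permK pE.
rewrite (bigD1 (s i)) //= big1 ?addr0 // => a ha.
have -> : C i a = 0 by apply/eqP; apply: contraTT ha => /sU ->; rewrite eqxx.
by rewrite scale0r.
Qed.


Theorem corollary4p6 (k : fieldType) (n : nat) (q : 'M[k]_n)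
    (A : algType k) (x : 'I_n -> A) :
  (0 < n)%N ->
  (forall i j, q i j * q j i = 1) -> (forall i, q i i = 1) ->
  is_quantum_affine_space q x ->
  injective (fun i : 'I_n => row i q) ->
  exists Phi : ('I_n -> k) -> {perm 'I_n} -> A -> A,
    [/\ forall lam p, (forall i, lam i != 0) -> p \in Pq q ->
          graded_aut x (Phi lam p),
        forall f, graded_aut x f ->
          exists lam p, [/\ forall i, lam i != 0, p \in Pq q & f =1 Phi lam p],
        forall lam p mu r, (forall i, lam i != 0) -> p \in Pq q ->
          (forall i, mu i != 0) -> r \in Pq q ->
          Phi lam p =1 Phi mu r -> lam =1 mu /\ p = r
      & forall lam p mu r, (forall i, lam i != 0) -> p \in Pq q ->
          (forall i, mu i != 0) -> r \in Pq q ->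
          Phi (fun i => lam i * perm_act p mu i) (r * p)%g
            =1 (Phi lam p \o Phi mu r)].
Proof.
move=> _ hinv hd HA hrow.
exists (Phi x); split.
- by move=> lam p Hl Hp; exact: (part_aut q x lam p HA Hl Hp).
- by move=> f Hf; exact: (part_surj q x HA hinv hd hrow f Hf).
- by move=> lam p mu r Hl Hp _ Hr E; apply: (part_inj _ _ _ _ _ _ HA hd Hl Hp Hr E).
- by move=> lam p mu r _ Hp _ Hr; exact: (part_comp q x lam p mu r HA Hp Hr).
Qed.
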